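(* The space $C([a,b],\mathbb{R}_\mathcal{I})$ of continuous interval-valued functions on $[a,b]$, with pointwise operations and the norm $\|\bar f\|_\infty=\max_{x\in[a,b]}\|\bar f(x)\|$, is a Banach space.
   Context: An interval number is a closed interval $\bar a=[a_l,a_r]$ with $a_l<a_r$ real; $\mathbb{R}_\mathcal{I}$ is the set of interval numbers. Write $a_c=(a_l+a_r)/2$, $a_w=(a_r-a_l)/2>0$, $\bar a=\langle a_c;a_w\rangle=[a_c-a_w,a_c+a_w]$. Operations: $\bar a+\bar b=\langle a_c+b_c;a_wb_w\rangle$, $k\bar a=\langle ka_c;a_w^k\rangle$, $\bar a-\bar b=\langle a_c-b_c;a_w/b_w\rangle$; norm $\|\bar a\|=\sqrt{a_c^2+\ln^2a_w}$; distance $d(\bar a,\bar b)=\|\bar a-\bar b\|$. Continuity of $\bar f:[a,b]\to\mathbb{R}_\mathcal{I}$ is with respect to $d$. Pointwise operations: $(\bar f+\bar g)(x)=\bar f(x)+\bar g(x)$, $(k\bar f)(x)=k\bar f(x)$. *)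

(* Defs.v *)
From Stdlib Require Import Reals Lra.
From Coquelicot Require Import Coquelicot.
Open Scope R_scope.

(* An interval number <c; w> = [c - w, c + w] with w > 0 (center/radius form). *)
Record Inum := mkI { ic : R; iw : R; iw_pos : 0 < iw }.

Definition Iadd (a b : Inum) : Inum :=
  mkI (ic a + ic b) (iw a * iw b) (Rmult_lt_0_compat _ _ (iw_pos a) (iw_pos b)).

Definition Iscal (k : R) (a : Inum) : Inum :=
  mkI (k * ic a) (Rpower (iw a) k) (exp_pos _).

Definition Isub (a b : Inum) : Inum :=
  mkI (ic a - ic b) (iw a / iw b)
      (Rdiv_lt_0_compat _ _ (iw_pos a) (iw_pos b)).

Definition Inorm (a : Inum) : R := sqrt (ic a ^ 2 + ln (iw a) ^ 2).

Definition Idist (a b : Inum) : R := Inorm (Isub a b).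

Definition Dom (a b : R) : Type := {x : R | a <= x <= b}.

Definition IFun (a b : R) : Type := Dom a b -> Inum.

Definition Izero : Inum := mkI 0 1 Rlt_0_1.

Definition Fzero {a b : R} : IFun a b := fun _ => Izero.
Definition Fadd {a b : R} (f g : IFun a b) : IFun a b := fun x => Iadd (f x) (g x).
Definition Fscal {a b : R} (k : R) (f : IFun a b) : IFun a b := fun x => Iscal k (f x).
Definition Fsub {a b : R} (f g : IFun a b) : IFun a b := fun x => Isub (f x) (g x).

Definition Icontinuous {a b : R} (f : IFun a b) : Prop :=
  forall (x : Dom a b) (eps : R), 0 < eps ->
    exists delta : R, 0 < delta /\
      forall y : Dom a b, Rabs (proj1_sig y - proj1_sig x) < delta ->
        Idist (f y) (f x) < eps.

Definition Supnorm {a b : R} (f : IFun a b) : R :=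
  real (Lub_Rbar (fun y => exists x : Dom a b, y = Inorm (f x))).

(* Main.v *)
Require Import Defs.
From Stdlib Require Import Reals Lra Lia ProofIrrelevance FunctionalExtensionality.
From Coquelicot Require Import Coquelicot.
Open Scope R_scope.

Definition N2 (x y : R) : R := sqrt (x ^ 2 + y ^ 2).
Definition L (a : Inum) : R := ln (iw a).

Lemma N2_tri x1 y1 x2 y2 : N2 (x1 + x2) (y1 + y2) <= N2 x1 y1 + N2 x2 y2.
Proof. exact (Cmod_triangle (x1, y1) (x2, y2)). Qed.

Lemma N2_ge0 x y : 0 <= N2 x y.
Proof. apply sqrt_pos. Qed.

Lemma N2_absx x y : Rabs x <= N2 x y.
Proof. unfold N2. rewrite <- sqrt_Rsqr_abs. apply sqrt_le_1_alt. unfold Rsqr. nra. Qed.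

Lemma N2_absy x y : Rabs y <= N2 x y.
Proof. unfold N2. rewrite <- sqrt_Rsqr_abs. apply sqrt_le_1_alt. unfold Rsqr. nra. Qed.

Lemma N2_le_abs x y : N2 x y <= Rabs x + Rabs y.
Proof.
  replace x with (x + 0) at 1 by ring. replace y with (0 + y) at 1 by ring.
  eapply Rle_trans; [apply N2_tri|].
  unfold N2. replace (x^2 + 0^2) with (x²) by (unfold Rsqr; ring).
  replace (0^2 + y^2) with (y²) by (unfold Rsqr; ring).
  rewrite !sqrt_Rsqr_abs. lra.
Qed.

Lemma N2_scal k x y : N2 (k * x) (k * y) = Rabs k * N2 x y.
Proof.
  unfold N2. replace ((k*x)^2 + (k*y)^2) with (k² * (x^2+y^2)) by (unfold Rsqr; ring).
  rewrite sqrt_mult_alt by apply Rle_0_sqr. rewrite sqrt_Rsqr_abs. reflexivity.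
Qed.

Lemma N2_opp x y : N2 (- x) (- y) = N2 x y.
Proof. unfold N2. f_equal. ring. Qed.

Lemma N2_sym x1 y1 x2 y2 : N2 (x1 - x2) (y1 - y2) = N2 (x2 - x1) (y2 - y1).
Proof. unfold N2. f_equal. ring. Qed.

Lemma N2_tri3 x1 y1 x2 y2 x3 y3 :
  N2 (x1 - x3) (y1 - y3) <= N2 (x1 - x2) (y1 - y2) + N2 (x2 - x3) (y2 - y3).
Proof.
  replace (x1 - x3) with ((x1 - x2) + (x2 - x3)) by ring.
  replace (y1 - y3) with ((y1 - y2) + (y2 - y3)) by ring. apply N2_tri.
Qed.

Lemma N2_rev x1 y1 x2 y2 : Rabs (N2 x1 y1 - N2 x2 y2) <= N2 (x1 - x2) (y1 - y2).
Proof.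
  apply Rabs_le. split.
  - pose proof (N2_tri3 x2 y2 x1 y1 0 0). rewrite !Rminus_0_r in H.
    rewrite N2_sym in H. lra.
  - pose proof (N2_tri3 x1 y1 x2 y2 0 0). rewrite !Rminus_0_r in H. lra.
Qed.

Lemma N2_eq0 x y : N2 x y = 0 -> x = 0 /\ y = 0.
Proof.
  unfold N2. intro H. apply sqrt_eq_0 in H; [|nra]. split; nra.
Qed.

Lemma N2_00 : N2 0 0 = 0.
Proof. unfold N2. replace (0^2+0^2) with 0 by ring. apply sqrt_0. Qed.

Lemma Inorm_N2 a : Inorm a = N2 (ic a) (L a).
Proof. reflexivity. Qed.

Lemma Idist_N2 a b : Idist a b = N2 (ic a - ic b) (L a - L b).
Proof.
  unfold Idist, Inorm, N2, L. simpl. rewrite ln_div by apply iw_pos. reflexivity.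
Qed.

Lemma L_add a b : L (Iadd a b) = L a + L b.
Proof. unfold L. simpl. apply ln_mult; apply iw_pos. Qed.

Lemma L_scal k a : L (Iscal k a) = k * L a.
Proof. unfold L. simpl. unfold Rpower. apply ln_exp. Qed.

Lemma L_sub a b : L (Isub a b) = L a - L b.
Proof. unfold L. simpl. apply ln_div; apply iw_pos. Qed.

Lemma Inum_eq (a b : Inum) : ic a = ic b -> iw a = iw b -> a = b.
Proof.
  destruct a as [c w p], b as [c' w' p']; simpl; intros -> ->.
  f_equal. apply proof_irrelevance.
Qed.

Lemma Inum_eqL (a b : Inum) : ic a = ic b -> L a = L b -> a = b.
Proof.
  intros H1 H2. apply Inum_eq; auto. unfold L in H2.
  rewrite <- (exp_ln (iw a)) by apply iw_pos. rewrite <- (exp_ln (iw b)) by apply iw_pos.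
  congruence.
Qed.

Section S.
Context (a b : R) (hab : a < b).

Definition pa : Dom a b := exist _ a (conj (Rle_refl a) (Rlt_le _ _ hab)).

Lemma sup_bounded (f : IFun a b) M : (forall x, Inorm (f x) <= M) ->
  (forall x, Inorm (f x) <= Supnorm f) /\
  (forall M', (forall x, Inorm (f x) <= M') -> Supnorm f <= M').
Proof.
  intros HM.
  set (E := fun y => exists x : Dom a b, y = Inorm (f x)).
  pose proof (Lub_Rbar_correct E) as [Hub Hl].
  assert (Hfin : is_finite (Lub_Rbar E)).
  { destruct (Lub_Rbar E) eqn:HE; try reflexivity.
    - exfalso. specialize (Hl M). apply Hl.
      intros y [x ->]. simpl. apply HM.
    - exfalso. specialize (Hub (Inorm (f pa)) (ex_intro _ pa eq_refl)).
      exact Hub. }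
  unfold Supnorm. fold E. split.
  - intros x. specialize (Hub _ (ex_intro _ x eq_refl)).
    rewrite <- Hfin in Hub. exact Hub.
  - intros M' HM'. specialize (Hl M'). rewrite <- Hfin in Hl. apply Hl.
    intros y [x ->]. simpl. apply HM'.
Qed.

Lemma sup_attained (f : IFun a b) x0 : (forall y, Inorm (f y) <= Inorm (f x0)) ->
  Supnorm f = Inorm (f x0).
Proof.
  intros H. destruct (sup_bounded f _ H) as [H1 H2].
  apply Rle_antisym; auto.
Qed.

Lemma Icont_N2 (f : IFun a b) : Icontinuous f <->
  forall (x : Dom a b) eps, 0 < eps -> exists delta, 0 < delta /\
    forall y : Dom a b, Rabs (proj1_sig y - proj1_sig x) < delta ->
      N2 (ic (f y) - ic (f x)) (L (f y) - L (f x)) < eps.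
Proof.
  unfold Icontinuous. split; intros H x eps He; destruct (H x eps He) as [d [Hd Hy]];
  exists d; split; auto; intros y Hyx; specialize (Hy y Hyx); rewrite Idist_N2 in *; auto.
Qed.

Definition clamp (x : R) : R := Rmax a (Rmin b x).
Lemma clamp_in x : a <= clamp x <= b.
Proof. unfold clamp, Rmax, Rmin. repeat destruct Rle_dec; lra. Qed.
Lemma clamp_lip x y : Rabs (clamp x - clamp y) <= Rabs (x - y).
Proof. unfold clamp, Rmax, Rmin. repeat destruct Rle_dec; apply Rabs_le; split;
  unfold Rabs; destruct Rcase_abs; lra. Qed.
Lemma clamp_id x : a <= x <= b -> clamp x = x.
Proof. intros. unfold clamp, Rmax, Rmin. repeat destruct Rle_dec; lra. Qed.

Definition cd (x : R) : Dom a b := exist _ (clamp x) (clamp_in x).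

Lemma evt (f : IFun a b) : Icontinuous f ->
  exists x : Dom a b, forall y, Inorm (f y) <= Inorm (f x).
Proof.
  intros Hf. set (g := fun x => Inorm (f (cd x))).
  destruct (continuity_ab_maj g a b (Rlt_le _ _ hab)) as [Mx [HM HMx]].
  - intros c _. apply continuity_pt_locally. intros eps.
    destruct (Hf (cd c) eps (cond_pos eps)) as [d [Hd Hy]].
    exists (mkposreal d Hd). intros y Hy'. unfold g.
    eapply Rle_lt_trans; [|apply (Hy (cd y))].
    + rewrite Idist_N2, !Inorm_N2. apply N2_rev.
    + simpl. eapply Rle_lt_trans; [apply clamp_lip|]. exact Hy'.
  - exists (cd Mx). intros [y Hy]. specialize (HM y Hy). unfold g, cd in HM.
    revert HM. generalize (clamp_in y). rewrite (clamp_id y Hy). intros p.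
    rewrite (proof_irrelevance _ p Hy). auto.
Qed.

End S.

Lemma Icont_lin a b (f g h : IFun a b) (al be : R) :
  Icontinuous f -> Icontinuous g ->
  (forall x, ic (h x) = al * ic (f x) + be * ic (g x)) ->
  (forall x, L (h x) = al * L (f x) + be * L (g x)) -> Icontinuous h.
Proof.
  intros Hf Hg Hc HL. apply (proj2 (Icont_N2 a b h)). pose proof (proj1 (Icont_N2 a b f) Hf) as Hf0. pose proof (proj1 (Icont_N2 a b g) Hg) as Hg0. clear Hf Hg. rename Hf0 into Hf. rename Hg0 into Hg.
  intros x eps He.
  set (K := Rabs al + Rabs be + 1).
  assert (HK : 0 < K) by (unfold K; pose proof (Rabs_pos al); pose proof (Rabs_pos be); lra).
  destruct (Hf x (eps / K)) as [d1 [Hd1 H1]]. { apply Rdiv_lt_0_compat; lra. }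
  destruct (Hg x (eps / K)) as [d2 [Hd2 H2]]. { apply Rdiv_lt_0_compat; lra. }
  exists (Rmin d1 d2). split. { apply Rmin_pos; lra. }
  intros y Hy. specialize (H1 y ltac:(eapply Rlt_le_trans; [exact Hy| apply Rmin_l])).
  specialize (H2 y ltac:(eapply Rlt_le_trans; [exact Hy| apply Rmin_r])).
  rewrite !Hc, !HL.
  replace (al * ic (f y) + be * ic (g y) - (al * ic (f x) + be * ic (g x)))
    with (al * (ic (f y) - ic (f x)) + be * (ic (g y) - ic (g x))) by ring.
  replace (al * L (f y) + be * L (g y) - (al * L (f x) + be * L (g x)))
    with (al * (L (f y) - L (f x)) + be * (L (g y) - L (g x))) by ring.
  eapply Rle_lt_trans; [apply N2_tri|]. rewrite !N2_scal.
  set (A := N2 (ic (f y) - ic (f x)) (L (f y) - L (f x))) in *. set (B := N2 (ic (g y) - ic (g x)) (L (g y) - L (g x))) in *.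
  assert (0 <= A) by apply N2_ge0. assert (0 <= B) by apply N2_ge0.
  pose proof (Rabs_pos al); pose proof (Rabs_pos be).
  assert (Heq : eps = K * (eps / K)) by (field; lra).
  assert (Rabs al * A <= Rabs al * (eps/K)) by (apply Rmult_le_compat_l; lra).
  assert (Rabs be * B <= Rabs be * (eps/K)) by (apply Rmult_le_compat_l; lra).
  assert (0 < eps / K) by (apply Rdiv_lt_0_compat; lra).
  rewrite Heq. set (e := eps / K) in *. clearbody e. unfold K. lra.
Qed.

Lemma L_zero : L Izero = 0.
Proof. unfold L. simpl. apply ln_1. Qed.

Lemma le_sup a b (hab : a < b) (f : IFun a b) : Icontinuous f ->
  forall x, Inorm (f x) <= Supnorm f.
Proof.
  intros Hf. destruct (evt a b hab f Hf) as [x0 H0].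
  exact (proj1 (sup_bounded a b hab f _ H0)).
Qed.

Lemma cont_add a b (f g : IFun a b) : Icontinuous f -> Icontinuous g -> Icontinuous (Fadd f g).
Proof. intros. apply (Icont_lin a b f g _ 1 1); auto; intros x; unfold Fadd;
  [simpl | rewrite L_add]; ring. Qed.
Lemma cont_sub a b (f g : IFun a b) : Icontinuous f -> Icontinuous g -> Icontinuous (Fsub f g).
Proof. intros. apply (Icont_lin a b f g _ 1 (-1)); auto; intros x; unfold Fsub;
  [simpl | rewrite L_sub]; ring. Qed.
Lemma cont_scal a b k (f : IFun a b) : Icontinuous f -> Icontinuous (Fscal k f).
Proof. intros. apply (Icont_lin a b f f _ k 0); auto; intros x; unfold Fscal;
  [simpl | rewrite L_scal]; ring. Qed.

Lemma Rdist_N2x x1 y1 x2 y2 : Rdist x1 x2 <= N2 (x1 - x2) (y1 - y2).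
Proof. unfold Rdist. apply N2_absx. Qed.
Lemma Rdist_N2y x1 y1 x2 y2 : Rdist y1 y2 <= N2 (x1 - x2) (y1 - y2).
Proof. unfold Rdist. apply N2_absy. Qed.

Lemma complete a b (hab : a < b) (u : nat -> IFun a b) : (forall n, Icontinuous (u n)) ->
     (forall eps : R, 0 < eps -> exists N : nat, forall m n : nat,
        (N <= m)%nat -> (N <= n)%nat -> Supnorm (Fsub (u m) (u n)) < eps) ->
     exists f : IFun a b, Icontinuous f /\
       forall eps : R, 0 < eps -> exists N : nat, forall n : nat,
         (N <= n)%nat -> Supnorm (Fsub (u n) f) < eps.
Proof.
  intros Hc HC.
  assert (HP : forall eps, 0 < eps -> exists N, forall m n, (N <= m)%nat -> (N <= n)%nat ->
    forall x, N2 (ic (u m x) - ic (u n x)) (L (u m x) - L (u n x)) < eps).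
  { intros eps He. destruct (HC eps He) as [N HN]. exists N. intros m n Hm Hn x.
    eapply Rle_lt_trans; [|apply (HN m n Hm Hn)].
    pose proof (le_sup a b hab _ (cont_sub a b _ _ (Hc m) (Hc n)) x) as H.
    unfold Fsub in H. rewrite Inorm_N2, L_sub in H. exact H. }
  assert (HcC : forall x, Cauchy_crit (fun n => ic (u n x))).
  { intros x eps He. destruct (HP eps He) as [N HN]. exists N. intros n m Hn Hm.
    eapply Rle_lt_trans; [apply Rdist_N2x|]. apply HN; lia. }
  assert (HcL : forall x, Cauchy_crit (fun n => L (u n x))).
  { intros x eps He. destruct (HP eps He) as [N HN]. exists N. intros n m Hn Hm.
    eapply Rle_lt_trans; [apply (Rdist_N2y (ic (u n x)) _ (ic (u m x)))|]. apply HN; lia. }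
  set (Cl := fun x => proj1_sig (Rcomplete.R_complete _ (HcC x))).
  set (Ll := fun x => proj1_sig (Rcomplete.R_complete _ (HcL x))).
  assert (HCl : forall x, Un_cv (fun n => ic (u n x)) (Cl x)).
  { intros x. exact (proj2_sig (Rcomplete.R_complete _ (HcC x))). }
  assert (HLl : forall x, Un_cv (fun n => L (u n x)) (Ll x)).
  { intros x. exact (proj2_sig (Rcomplete.R_complete _ (HcL x))). }
  clearbody Cl Ll.
  set (f := fun x : Dom a b => mkI (Cl x) (exp (Ll x)) (exp_pos _)).
  assert (Hfc : forall x, ic (f x) = Cl x) by reflexivity.
  assert (HfL : forall x, L (f x) = Ll x) by (intros; unfold L; simpl; apply ln_exp).
  assert (HU : forall eps, 0 < eps -> exists N, forall n, (N <= n)%nat -> forall x,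
     N2 (ic (u n x) - ic (f x)) (L (u n x) - L (f x)) <= eps).
  { intros eps He. destruct (HP eps He) as [N HN]. exists N. intros n Hn x.
    rewrite Hfc, HfL.
    destruct (Rle_lt_dec (N2 (ic (u n x) - Cl x) (L (u n x) - Ll x)) eps) as [Hle|Hlt]; auto.
    exfalso. set (V := N2 (ic (u n x) - Cl x) (L (u n x) - Ll x)) in *.
    set (d := V - eps).
    destruct (HCl x (d/2) ltac:(unfold d; lra)) as [N1 H1].
    destruct (HLl x (d/2) ltac:(unfold d; lra)) as [N2' H2].
    set (m := Nat.max N (Nat.max N1 N2')).
    specialize (H1 m ltac:(unfold m; lia)). specialize (H2 m ltac:(unfold m; lia)).
    unfold Rdist in H1, H2. simpl in H1, H2.
    specialize (HN n m Hn ltac:(unfold m; lia) x).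
    pose proof (N2_tri3 (ic (u n x)) (L (u n x)) (ic (u m x)) (L (u m x)) (Cl x) (Ll x)) as T.
    pose proof (N2_le_abs (ic (u m x) - Cl x) (L (u m x) - Ll x)).
    fold V in T. unfold d in *. lra. }
  exists f. split.
  - apply (proj2 (Icont_N2 a b f)). intros x eps He.
    destruct (HU (eps/4) ltac:(lra)) as [N HN].
    destruct (proj1 (Icont_N2 a b (u N)) (Hc N) x (eps/4) ltac:(lra)) as [d [Hd Hy]].
    exists d. split; auto. intros y Hyx. specialize (Hy y Hyx).
    pose proof (HN N (le_n _) x) as Hx. pose proof (HN N (le_n _) y) as Hy2.
    rewrite N2_sym in Hy2.
    pose proof (N2_tri3 (ic (f y)) (L (f y)) (ic (u N y)) (L (u N y)) (ic (f x)) (L (f x))).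
    pose proof (N2_tri3 (ic (u N y)) (L (u N y)) (ic (u N x)) (L (u N x)) (ic (f x)) (L (f x))).
    lra.
  - intros eps He. destruct (HU (eps/2) ltac:(lra)) as [N HN]. exists N. intros n Hn.
    assert (Hb : forall x, Inorm (Fsub (u n) f x) <= eps/2).
    { intros x. unfold Fsub. rewrite Inorm_N2, L_sub. simpl. apply HN; auto. }
    pose proof (proj2 (sup_bounded a b hab _ _ Hb) _ Hb). lra.
Qed.

Theorem theorem3p9 (a b : R) (hab : a < b) :
  (forall f : IFun a b, Icontinuous f ->
     exists x : Dom a b, Supnorm f = Inorm (f x) /\
       forall y : Dom a b, Inorm (f y) <= Supnorm f) /\
  Icontinuous (@Fzero a b) /\
  (forall f g : IFun a b, Icontinuous f -> Icontinuous g -> Icontinuous (Fadd f g)) /\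
  (forall (k : R) (f : IFun a b), Icontinuous f -> Icontinuous (Fscal k f)) /\
  (forall f g h : IFun a b, Icontinuous f -> Icontinuous g -> Icontinuous h ->
     Fadd f (Fadd g h) = Fadd (Fadd f g) h) /\
  (forall f g : IFun a b, Icontinuous f -> Icontinuous g -> Fadd f g = Fadd g f) /\
  (forall f : IFun a b, Icontinuous f -> Fadd f Fzero = f) /\
  (forall f : IFun a b, Icontinuous f -> Fadd f (Fscal (-1) f) = Fzero) /\
  (forall (k : R) (f g : IFun a b), Icontinuous f -> Icontinuous g ->
     Fscal k (Fadd f g) = Fadd (Fscal k f) (Fscal k g)) /\
  (forall (k l : R) (f : IFun a b), Icontinuous f ->
     Fscal (k + l) f = Fadd (Fscal k f) (Fscal l f)) /\
  (forall (k l : R) (f : IFun a b), Icontinuous f ->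
     Fscal (k * l) f = Fscal k (Fscal l f)) /\
  (forall f : IFun a b, Icontinuous f -> Fscal 1 f = f) /\
  (forall f : IFun a b, Icontinuous f -> 0 <= Supnorm f) /\
  (forall f : IFun a b, Icontinuous f -> (Supnorm f = 0 <-> f = Fzero)) /\
  (forall (k : R) (f : IFun a b), Icontinuous f -> Supnorm (Fscal k f) = Rabs k * Supnorm f) /\
  (forall f g : IFun a b, Icontinuous f -> Icontinuous g ->
     Supnorm (Fadd f g) <= Supnorm f + Supnorm g) /\
  (forall u : nat -> IFun a b, (forall n, Icontinuous (u n)) ->
     (forall eps : R, 0 < eps -> exists N : nat, forall m n : nat,
        (N <= m)%nat -> (N <= n)%nat -> Supnorm (Fsub (u m) (u n)) < eps) ->
     exists f : IFun a b, Icontinuous f /\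
       forall eps : R, 0 < eps -> exists N : nat, forall n : nat,
         (N <= n)%nat -> Supnorm (Fsub (u n) f) < eps).
Proof.
  assert (Hz : Icontinuous (@Fzero a b)).
  { intros x eps He. exists 1. split; [lra|]. intros y _. rewrite Idist_N2.
    unfold Fzero. rewrite L_zero. simpl. rewrite !Rminus_0_r, N2_00. exact He. }
  Ltac ext := apply functional_extensionality; intro x; apply Inum_eqL;
    unfold Fadd, Fscal, Fzero; simpl; rewrite ?L_add, ?L_scal, ?L_add, ?L_scal, ?L_zero; ring.
  split.
  { intros f Hf. destruct (evt a b hab f Hf) as [x0 H0]. exists x0.
    split; [apply sup_attained; auto|]. apply le_sup; auto. }
  split.
  { exact Hz. }
  split.
  { apply cont_add. }
  split.
  { apply cont_scal. }
  split.
  { intros; ext. }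
  split.
  { intros; ext. }
  split.
  { intros; ext. }
  split.
  { intros; ext. }
  split.
  { intros; ext. }
  split.
  { intros; ext. }
  split.
  { intros; ext. }
  split.
  { intros f _. apply functional_extensionality; intro x; apply Inum_eqL;
    unfold Fscal; simpl; [ring|]. rewrite L_scal. ring. }
  split.
  { intros f Hf. destruct (evt a b hab f Hf) as [x0 H0].
    rewrite (sup_attained a b hab f x0 H0). apply N2_ge0. }
  split.
  { intros f Hf. split.
    + intros H0. apply functional_extensionality; intro x.
      pose proof (le_sup a b hab f Hf x). rewrite Inorm_N2 in H.
      pose proof (N2_ge0 (ic (f x)) (L (f x))).
      destruct (N2_eq0 (ic (f x)) (L (f x))) as [E1 E2]; [lra|].
      apply Inum_eqL; unfold Fzero; simpl; rewrite ?L_zero; auto.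
    + intros ->. rewrite (sup_attained a b hab Fzero (pa a b hab)).
      * rewrite Inorm_N2. unfold Fzero. rewrite L_zero. apply N2_00.
      * intros; apply Rle_refl. }
  split.
  { intros k f Hf. destruct (evt a b hab f Hf) as [x0 H0].
    rewrite (sup_attained a b hab f x0 H0).
    rewrite (sup_attained a b hab (Fscal k f) x0).
    + unfold Fscal. rewrite Inorm_N2, L_scal. simpl. rewrite N2_scal. reflexivity.
    + intros y. unfold Fscal. rewrite !Inorm_N2, !L_scal. simpl. rewrite !N2_scal.
      apply Rmult_le_compat_l; [apply Rabs_pos|]. apply H0. }
  split.
  { intros f g Hf Hg. destruct (evt a b hab _ (cont_add a b f g Hf Hg)) as [x0 H0].
    rewrite (sup_attained a b hab _ x0 H0).
    unfold Fadd. rewrite Inorm_N2, L_add. simpl. eapply Rle_trans; [apply N2_tri|].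
    pose proof (le_sup a b hab f Hf x0). pose proof (le_sup a b hab g Hg x0).
    rewrite Inorm_N2 in *. lra. }
  { apply complete; auto. }
Qed.
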